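(* The class $\mathbb{ML}^{\Box}$, regarded as a class of algebras $(L;\wedge,\vee,\neg,\Box)$, is an equational class (a variety). Concretely, an algebra $(L;\wedge,\vee,\neg,\Box)$ belongs to $\mathbb{ML}^{\Box}$ if and only if it satisfies the lattice identities, the identities $x\wedge\neg x\preccurlyeq y$, $y\preccurlyeq\neg(x\wedge\neg x)$, $x\wedge\neg(x\wedge y)\preccurlyeq\neg y$, and the identities $x\vee\neg\Box x\approx 1$, $\Box 1\approx 1$, and $\Box(x\vee\neg y)\wedge y\approx\Box x\wedge y$, where $1$ abbreviates $\neg(x\wedge\neg x)$ and $s\preccurlyeq t$ abbreviates $s\wedge t\approx s$.
   Context: A meet-complemented lattice is a lattice $(L,\le)$ (not necessarily distributive) such that for every $a\in L$ the element $\neg a=\max\{b\in L: a\wedge b\le c\ \text{for all } c\in L\}$ exists; such a lattice is bounded, with bottom $0$ and top $1=\neg(a\wedge\neg a)$. For $a\in L$, the necessity of $a$ is $\Box a=\max\{b\in L: a\vee\neg b=1\}$, when it exists. $\mathbb{ML}^{\Box}$ is the class of meet-complemented lattices in which $\Box a$ exists for every $a$, considered as algebras with operations $\wedge,\vee,\neg,\Box$. *)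

(* Defs.v *)
Section Alg.
Variables (L : Type) (meet join : L -> L -> L) (neg box : L -> L).

Definition lattice_identities : Prop :=
  (forall x y, meet x y = meet y x) /\
  (forall x y, join x y = join y x) /\
  (forall x y z, meet x (meet y z) = meet (meet x y) z) /\
  (forall x y z, join x (join y z) = join (join x y) z) /\
  (forall x y, meet x (join x y) = x) /\
  (forall x y, join x (meet x y) = x).

(* the lattice order: a <= b iff a /\ b = a  (also the meaning of s ≼ t) *)
Definition leL (a b : L) : Prop := meet a b = a.

Definition is_max (P : L -> Prop) (m : L) : Prop :=
  P m /\ forall b, P b -> leL b m.

Definition is_top (t : L) : Prop := forall c, leL c t.

Definition is_pseudocomplement (a na : L) : Prop :=
  is_max (fun b => forall c, leL (meet a b) c) na.

Definition is_necessity (a ba : L) : Prop :=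
  is_max (fun b => is_top (join a (neg b))) ba.

Definition in_MLbox : Prop :=
  lattice_identities /\
  (forall a, is_pseudocomplement a (neg a)) /\
  (forall a, is_necessity a (box a)).

Definition one (x : L) : L := neg (meet x (neg x)).

Definition MLbox_identities : Prop :=
  lattice_identities /\
  (forall x y, leL (meet x (neg x)) y) /\
  (forall x y, leL y (neg (meet x (neg x)))) /\
  (forall x y, leL (meet x (neg (meet x y))) (neg y)) /\
  (forall x, join x (neg (box x)) = one x) /\
  (forall x, box (one x) = one x) /\
  (forall x y, meet (box (join x (neg y))) y = meet (box x) y).

End Alg.

(* Main.v *)
Require Import Defs.
From Stdlib Require Import Setoid.

Section H.
Context (L : Type) (meet join : L -> L -> L) (neg box : L -> L).
Context (HL : lattice_identities L meet join).
Notation le := (leL L meet).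

Lemma mC x y : meet x y = meet y x. Proof. apply HL. Qed.
Lemma jC x y : join x y = join y x. Proof. apply HL. Qed.
Lemma mA x y z : meet x (meet y z) = meet (meet x y) z. Proof. apply HL. Qed.
Lemma jA x y z : join x (join y z) = join (join x y) z. Proof. apply HL. Qed.
Lemma mJ x y : meet x (join x y) = x. Proof. apply HL. Qed.
Lemma jM x y : join x (meet x y) = x. Proof. apply HL. Qed.

Lemma mI x : meet x x = x.
Proof. pose proof (mJ x (meet x x)) as H. rewrite jM in H. exact H. Qed.
Lemma jI x : join x x = x.
Proof. pose proof (jM x (join x x)) as H. rewrite mJ in H. exact H. Qed.

Lemma le_join a b : le a b <-> join a b = b.
Proof. unfold leL; split; intro H.
- rewrite <- H, jC, mC. apply jM.
- rewrite <- H. apply mJ. Qed.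

Lemma le_anti a b : le a b -> le b a -> a = b.
Proof. unfold leL; intros H1 H2. rewrite <- H1. rewrite mC. exact H2. Qed.
Lemma le_trans a b c : le a b -> le b c -> le a c.
Proof. unfold leL; intros H1 H2. rewrite <- H1, <- mA, H2. reflexivity. Qed.
Lemma le_refl a : le a a. Proof. apply mI. Qed.
Lemma le_ml a b : le (meet a b) a.
Proof. unfold leL. rewrite mC, mA, mI. reflexivity. Qed.
Lemma le_mr a b : le (meet a b) b.
Proof. rewrite mC. apply le_ml. Qed.
Lemma le_glb a b c : le c a -> le c b -> le c (meet a b).
Proof. unfold leL; intros H1 H2. rewrite mA, H1, H2. reflexivity. Qed.
Lemma le_jl a b : le a (join a b).
Proof. apply le_join. rewrite jA, jI. reflexivity. Qed.
Lemma le_jr a b : le b (join a b).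
Proof. rewrite jC. apply le_jl. Qed.
Lemma le_lub a b c : le a c -> le b c -> le (join a b) c.
Proof. rewrite !le_join; intros H1 H2. rewrite <- jA, H2, H1. reflexivity. Qed.

End H.

Theorem mainTheorem1 (L : Type) (meet join : L -> L -> L) (neg box : L -> L) :
  in_MLbox L meet join neg box <-> MLbox_identities L meet join neg box.
Proof.
split.
- intros [HL [Hn Hb]].
  assert (bot : forall a c, leL L meet (meet a (neg a)) c) by (intros a; apply (Hn a)).
  assert (negmax : forall a b, (forall c, leL L meet (meet a b) c) -> leL L meet b (neg a))
    by (intros a b; apply (Hn a)).
  assert (topx : forall x y, leL L meet y (one L meet neg x)).
  { intros x y. apply negmax. intro c.
    apply (le_trans L meet join HL _ (meet x (neg x))); [apply (le_ml L meet join HL)|apply bot]. }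
  assert (antiN : forall a b, leL L meet a b -> leL L meet (neg b) (neg a)).
  { intros a b H. apply negmax. intro c.
    apply (le_trans L meet join HL _ (meet b (neg b))); [|apply bot].
    apply (le_glb L meet join HL).
    + apply (le_trans L meet join HL _ a); [apply (le_ml L meet join HL)|exact H].
    + apply (le_mr L meet join HL). }
  assert (topeq : forall x t, is_top L meet t -> t = one L meet neg x).
  { intros x t Ht. apply (le_anti L meet join HL); [apply topx|apply Ht]. }
  assert (bmax : forall a b, is_top L meet (join a (neg b)) -> leL L meet b (box a))
    by (intros a b; apply (Hb a)).
  assert (btop : forall a, is_top L meet (join a (neg (box a)))) by (intro a; apply (Hb a)).
  split; [exact HL|]. split; [exact bot|]. split; [exact topx|]. split.
  { intros x y. apply negmax. intro c.
    apply (le_trans L meet join HL _ (meet (meet x y) (neg (meet x y)))); [|apply bot].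
    apply (le_glb L meet join HL).
    + apply (le_glb L meet join HL).
      * apply (le_trans L meet join HL _ (meet x (neg (meet x y)))); [apply (le_mr L meet join HL)|apply (le_ml L meet join HL)].
      * apply (le_ml L meet join HL).
    + apply (le_trans L meet join HL _ (meet x (neg (meet x y)))); apply (le_mr L meet join HL). }
  split.
  { intro x. apply topeq. apply btop. }
  split.
  { intro x. apply (le_anti L meet join HL); [apply topx|].
    apply bmax. intro c. apply (le_trans L meet join HL _ (one L meet neg x)); [apply topx|apply (le_jl L meet join HL)]. }
  { intros x y. apply (le_anti L meet join HL).
    + apply (le_glb L meet join HL); [|apply (le_mr L meet join HL)].
      apply bmax. intro c.
      apply (le_trans L meet join HL _ (join (join x (neg y)) (neg (box (join x (neg y)))))); [apply btop|].
      apply (le_lub L meet join HL); [apply (le_lub L meet join HL)|].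
      * apply (le_jl L meet join HL).
      * apply (le_trans L meet join HL _ (neg (meet (box (join x (neg y))) y))); [|apply (le_jr L meet join HL)].
        apply antiN. apply (le_mr L meet join HL).
      * apply (le_trans L meet join HL _ (neg (meet (box (join x (neg y))) y))); [|apply (le_jr L meet join HL)].
        apply antiN. apply (le_ml L meet join HL).
    + apply (le_glb L meet join HL); [|apply (le_mr L meet join HL)].
      apply (le_trans L meet join HL _ (box x)); [apply (le_ml L meet join HL)|].
      apply bmax. intro c.
      apply (le_trans L meet join HL _ (join x (neg (box x)))); [apply btop|].
      apply (le_lub L meet join HL).
      * apply (le_trans L meet join HL _ (join x (neg y))); apply (le_jl L meet join HL).
      * apply (le_jr L meet join HL). }
- intros [HL [H1 [H2 [H3 [H4 [H5 H6]]]]]].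
  split; [exact HL|]. split.
  + intro a. split; [intro c; apply H1|].
    intros b Hb.
    assert (E : meet b a = meet a (neg a)).
    { apply (le_anti L meet join HL); [rewrite (mC L meet join HL); apply Hb|apply H1]. }
    pose proof (H3 b a) as H. rewrite E in H.
    assert (E2 : meet b (neg (meet a (neg a))) = b) by apply H2.
    rewrite E2 in H. exact H.
  + intro a. split.
    * intro c. rewrite H4. apply H2.
    * intros b Hb.
      assert (E : join a (neg b) = one L meet neg a).
      { apply (le_anti L meet join HL); [apply H2|apply Hb]. }
      pose proof (H6 a b) as H. rewrite E, H5 in H.
      assert (E2 : meet (one L meet neg a) b = b) by (rewrite (mC L meet join HL); apply H2).
      rewrite E2 in H. unfold leL. rewrite (mC L meet join HL). symmetry. exact H.
Qed.
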